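(* Let $\mathbf z_1,\dots,\mathbf z_d\in\mathbb Z^d$ be a basis of $\mathbb Z^d$. Then for each $\boldsymbol\alpha\in\mathfrak S_2$ we have \[\frac{1}{D_{2,d-1}B_1^{d-1}}\Big(1-\frac{1}{2B_1B_2}\Big)\leq|L_{\boldsymbol\alpha}(\mathbf z_1)|\cdot|\underline{\mathbf z_1}|^{d-1}\leq\frac{1}{D_{2,d-1}B_1^{d-1}}\Big(1+\frac{1}{2B_1B_2}\Big).\]
   Context: Let $d\geq2$. $|\cdot|$ is the Euclidean norm, $\langle\cdot,\cdot\rangle$ the standard inner product. For $\mathbf x=(x_1,\dots,x_d)\in\mathbb R^d$ write $\underline{\mathbf x}=(x_1,\dots,x_{d-1})$. Let $\pi_d=\{\mathbf x\in\mathbb R^d:x_d=1\}$ and $L_{\boldsymbol\alpha}(\mathbf x)=\langle\boldsymbol\alpha,\mathbf x\rangle$ for $\boldsymbol\alpha\in\pi_d$. For given vectors $\mathbf z_1,\mathbf z_2,\dots$: $\det\underline\Lambda_{k,l}=|\underline{\mathbf z_k}\wedge\dots\wedge\underline{\mathbf z_{k+l-1}}|$ ($1\le l\le d-1$); $D_{k,l}=\det\underline\Lambda_{k,l}/|\underline{\mathbf z_k}|^l$; $B_k=|\underline{\mathbf z_{k+1}}|/|\underline{\mathbf z_k}|$; $R_k=1/(2|\underline{\mathbf z_{k+1}}|\det\underline\Lambda_{k,d-1})$; when $\underline{\mathbf z_k},\dots,\underline{\mathbf z_{k+d-2}}$ are linearly independent, $\boldsymbol\alpha_k$ is the unique point of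 $\pi_d$ orthogonal to $\mathbf z_k,\dots,\mathbf z_{k+d-2}$ and $\mathfrak S_k=\{\mathbf x\in\pi_d:|\mathbf x-\boldsymbol\alpha_k|\le R_k\}$. In the claim, $B_2$ and $R_2$ involve a vector $\mathbf z_3$ (with $\mathbf z_3$ among $\mathbf z_1,\dots,\mathbf z_d$ when $d\ge3$; when $d=2$ an additional vector $\mathbf z_3\in\mathbb Z^d$ is assumed given); whenever $\boldsymbol\alpha_k$ or $\mathfrak S_k$ appears it is implicitly assumed well defined. *)

(* Defs.v *)
From mathcomp Require Import all_boot all_order all_algebra.
From mathcomp Require Import reals.
Set Implicit Arguments. Unset Strict Implicit. Unset Printing Implicit Defensive.
Import Order.TTheory GRing.Theory Num.Theory.
Local Open Scope ring_scope.

(* Throughout, d = n.+1 (so d >= 2 iff n >= 1); vectors of R^d are 'rV[R]_(n.+1). *)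
Section Defs.
Variable R : realType.
Variable n : nat.

Definition dotp m (x y : 'rV[R]_m) : R := \sum_(i < m) x 0 i * y 0 i.
Definition enorm m (x : 'rV[R]_m) : R := Num.sqrt (dotp x x).

Definition ul (x : 'rV[R]_n.+1) : 'rV[R]_n :=
  \row_(i < n) x 0 (widen_ord (leqnSn n) i).

Definition on_pi (x : 'rV[R]_n.+1) : Prop := x 0 ord_max = 1.

Definition Lf (a x : 'rV[R]_n.+1) : R := dotp a x.

Variable z : nat -> 'rV[R]_n.+1.

Definition ulmx (k l : nat) : 'M[R]_(l, n) := \matrix_(i < l) ul (z (k + i)).

(* det Lambda_{k,l} = | ul z_k /\ ... /\ ul z_{k+l-1} | (Gram determinant) *)
Definition detLam (k l : nat) : R :=
  Num.sqrt (\det (ulmx k l *m (ulmx k l)^T)).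

Definition Dkl (k l : nat) : R := detLam k l / enorm (ul (z k)) ^+ l.
Definition Bk (k : nat) : R := enorm (ul (z k.+1)) / enorm (ul (z k)).
Definition Rk (k : nat) : R := (2 * enorm (ul (z k.+1)) * detLam k n)^-1.

(* alpha_k is well defined: ul z_k, ..., ul z_{k+d-2} linearly independent *)
Definition alpha_wd (k : nat) : Prop := row_free (ulmx k n).

(* a is a point of pi_d orthogonal to z_k, ..., z_{k+d-2}
   (under alpha_wd k, this characterizes alpha_k uniquely) *)
Definition is_alpha (k : nat) (a : 'rV[R]_n.+1) : Prop :=
  on_pi a /\ forall i : 'I_n, dotp a (z (k + i)) = 0.

Definition in_frakS (k : nat) (ak x : 'rV[R]_n.+1) : Prop :=
  on_pi x /\ enorm (x - ak) <= Rk k.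

End Defs.

Definition zR (R : realType) n (zi : nat -> 'rV[int]_n.+1) (k : nat) : 'rV[R]_n.+1 :=
  map_mx (fun c : int => c%:~R) (zi k).

(* z_1, ..., z_d is a basis of Z^d: the integer matrix with these rows is unimodular *)
Definition Zbasis n (zi : nat -> 'rV[int]_n.+1) : Prop :=
  (\matrix_(i < n.+1) zi i.+1) \in unitmx.

(* Main.v *)
Require Import Defs.
From mathcomp Require Import all_boot all_order all_algebra.
From mathcomp Require Import reals.
From mathcomp Require Import ring lra.
Import Order.TTheory GRing.Theory Num.Theory.
Local Open Scope ring_scope.

Section Helpers.
Variable R : realType.

Lemma dotpC m (x y : 'rV[R]_m) : dotp x y = dotp y x.
Proof. by rewrite /dotp; apply: eq_bigr => i _; rewrite mulrC. Qed.

Lemma dotpDl m (x y w : 'rV[R]_m) : dotp (x + y) w = dotp x w + dotp y w.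
Proof. by rewrite /dotp -big_split; apply: eq_bigr => i _; rewrite mxE mulrDl. Qed.

Lemma dotp_split n (x y : 'rV[R]_n.+1) :
  dotp x y = dotp (ul x) (ul y) + x 0 ord_max * y 0 ord_max.
Proof. by rewrite /dotp big_ord_recr /=; congr (_ + _); apply: eq_bigr => i _; rewrite !mxE. Qed.

Lemma dotp_ge0 m (x : 'rV[R]_m) : 0 <= dotp x x.
Proof. by rewrite /dotp sumr_ge0 // => i _; rewrite -expr2 sqr_ge0. Qed.

Lemma CS2 m (x y : 'rV[R]_m) : dotp x y ^+ 2 <= dotp x x * dotp y y.
Proof.
pose f i j := (x 0 i * y 0 j - x 0 j * y 0 i) ^+ 2.
have H0 : 0 <= \sum_i \sum_j f i j.
  by apply: sumr_ge0 => i _; apply: sumr_ge0 => j _; exact: sqr_ge0.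
have E1 : dotp x x * dotp y y = \sum_i \sum_j (x 0 i * x 0 i * (y 0 j * y 0 j)).
  by rewrite /dotp mulr_suml; apply: eq_bigr => i _; rewrite mulr_sumr.
have E2 : dotp x x * dotp y y = \sum_i \sum_j (x 0 j * x 0 j * (y 0 i * y 0 i)).
  by rewrite mulrC /dotp mulr_suml; apply: eq_bigr => i _; rewrite mulr_sumr;
     apply: eq_bigr => j _; rewrite mulrC.
have E3 : dotp x y ^+ 2 = \sum_i \sum_j (x 0 i * y 0 i * (x 0 j * y 0 j)).
  by rewrite expr2 /dotp mulr_suml; apply: eq_bigr => i _; rewrite mulr_sumr.
have E : \sum_i \sum_j f i j = dotp x x * dotp y y + dotp x x * dotp y y - 2 * (dotp x y ^+ 2).
  have -> : \sum_i \sum_j f i j = \sum_i \sum_j (x 0 i * x 0 i * (y 0 j * y 0 j)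
     + x 0 j * x 0 j * (y 0 i * y 0 i) - 2 * (x 0 i * y 0 i * (x 0 j * y 0 j))).
    by apply: eq_bigr => i _; apply: eq_bigr => j _; rewrite /f; ring.
  rewrite {1}E1 E2 E3; symmetry.
  rewrite mulr_sumr -big_split -sumrB /=; apply: eq_bigr => i _.
  by rewrite mulr_sumr -big_split -sumrB /=; apply: eq_bigr => j _; ring.
move: H0; rewrite E; lra.
Qed.

Lemma CS m (x y : 'rV[R]_m) : `|dotp x y| <= enorm x * enorm y.
Proof.
rewrite /enorm -sqrtrM ?dotp_ge0 // -sqrtr_sqr ler_sqrt ?CS2 //.
by rewrite mulr_ge0 ?dotp_ge0.
Qed.

End Helpers.
Lemma enorm_eq0 (R : realType) m (x : 'rV[R]_m) : enorm x = 0 -> forall j, x 0 j = 0.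
Proof.
move=> /eqP; rewrite sqrtr_eq0 => h j.
have h0 : dotp x x = 0 by apply/eqP; rewrite eq_le h dotp_ge0.
move/eqP: h0; rewrite /dotp psumr_eq0 => [/allP /(_ j (mem_index_enum j)) /=|i _].
  by rewrite mulf_eq0 orbb => /eqP.
by rewrite -expr2 sqr_ge0.
Qed.

Theorem lemma2 (R : realType) (n : nat) (zi : nat -> 'rV[int]_n.+1) :
  (1 <= n)%N ->
  Zbasis zi ->
  let z := zR R zi in
  alpha_wd z 2%N ->
  forall a2 : 'rV[R]_n.+1, is_alpha z 2%N a2 ->
  forall a : 'rV[R]_n.+1, in_frakS z 2%N a2 a ->
  let c := (Dkl z 2%N n * Bk z 1%N ^+ n)^-1 in
  c * (1 - (2 * Bk z 1%N * Bk z 2%N)^-1)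
    <= `|Lf a (z 1%N)| * enorm (ul (z 1%N)) ^+ n
    <= c * (1 + (2 * Bk z 1%N * Bk z 2%N)^-1).
Proof.
move=> n1 hZ z _ a2 [ha2pi ha2o] a [hapi hdist]; lazy zeta.
set c := (Dkl _ _ _ * _)^-1.
pose Zi := \matrix_(i < n.+1) zi i.+1.
pose ZR := \matrix_(i < n.+1) z i.+1.
have ZRE : ZR = map_mx (fun c : int => c%:~R) Zi.
  by apply/matrixP => i j; rewrite !mxE.
have hdetZ : `|\det ZR| = 1.
  rewrite ZRE (det_map_mx (intr : {rmorphism int -> R})).
  move: hZ; rewrite /Zbasis unitmxE -/Zi.
  by case/orP => /eqP ->; rewrite ?rmorphN rmorph1 ?normrN normr1.
pose L0 := dotp a2 (z 1%N).
pose v := ZR *m a2^T.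
have hv : forall i, v i 0 = if i == ord0 then L0 else 0.
  move=> i; rewrite mxE.
  have -> : \sum_j ZR i j * a2^T j 0 = dotp a2 (z i.+1).
    by rewrite /dotp; apply: eq_bigr => j _; rewrite !mxE mulrC.
  case: eqP => [-> //|hi].
  have hi' : (i.-1 < n)%N.
    by case: i hi => [[|k]] //= hk _; rewrite -ltnS.
  have := ha2o (Ordinal hi'); rewrite /= add2n prednK //.
  by rewrite lt0n; apply/eqP => h0; apply: hi; apply: val_inj.
have hdetL : \det ZR = cofactor ZR ord0 ord_max * L0.
  have := congr1 (fun M => (M *m a2^T) ord_max 0) (mul_adj_mx ZR).
  rewrite /= -mulmxA -/v mul_scalar_mx !mxE ha2pi mulr1 => <-.
  rewrite big_ord_recl hv eqxx big1 ?addr0 //.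
  rewrite /adjugate. by rewrite (mxE adjugate_key (fun i j => cofactor ZR j i)).
  by move=> i _; rewrite hv mulr0.
pose M := ulmx z 2 n.
have hcof : cofactor ZR ord0 ord_max = (-1) ^+ (0 + n) * \det M.
  rewrite /cofactor; congr (_ * \det _).
  apply/matrixP => i j; rewrite !mxE /z /zR ?mxE.
  have h1 : ((lift ord0 i).+1 = 2 + i)%N by rewrite lift0 add2n.
  have h2 : lift ord_max j = widen_ord (leqnSn n) j by apply: val_inj; rewrite /= ?lift_max /bump; case: leqP => // h; move: (ltn_ord j); rewrite ltnNge h.
  by rewrite h1 h2.
have hLD : `|L0| * `|\det M| = 1.
  by rewrite -hdetZ hdetL hcof normrM normrMsign mulrC.
have hDL : detLam z 2 n = `|\det M|.
  by rewrite /detLam -/M det_mulmx det_tr -expr2 sqrtr_sqr.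
set D := `|\det M| in hLD hDL.
have D0 : 0 < D.
  rewrite lt_neqAle normr_ge0 andbT; apply/eqP => h; move: hLD; rewrite -h mulr0.
  by move/eqP; rewrite eq_sym oner_eq0.
set N1 := enorm (ul (z 1%N)).
set N2 := enorm (ul (z 2%N)).
set N3 := enorm (ul (z 3%N)).
have N10 : 0 <= N1 by exact: sqrtr_ge0.
have N30 : 0 <= N3 by exact: sqrtr_ge0.
have N20 : 0 < N2.
  rewrite lt_neqAle sqrtr_ge0 andbT; apply/eqP => /esym h.
  have hz := @enorm_eq0 _ _ _ h.
  have : \det M != 0 by rewrite -normr_eq0 -/D gt_eqF.
  rewrite (expand_det_row M (Ordinal n1)) big1 ?eqxx // => j _.
  by rewrite /M /ulmx mxE /= hz mul0r.
pose E := dotp (a - a2) (z 1%N).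
have hLa : Lf a (z 1%N) = L0 + E.
  by rewrite /L0 /E -dotpDl addrC subrK.
have hlast : (a - a2) 0 ord_max = 0.
  by rewrite !mxE hapi ha2pi subrr.
have hE : `|E| <= Rk z 2 * N1.
  rewrite /E dotp_split hlast mul0r addr0.
  apply: (le_trans (@CS R _ _ _)); apply: ler_wpM2r => //.
  move: hdist; rewrite /enorm dotp_split hlast mul0r addr0.
  by [].
rewrite hLa.
have nn0 : n != 0%N by rewrite -lt0n.
have [N1z|N1p] := eqVneq N1 0.
  have -> : c = 0.
    by rewrite /c /Bk -/N1 -/N2 N1z invr0 mulr0 expr0n (negbTE nn0) mulr0 invr0.
  by rewrite N1z expr0n (negbTE nn0) !mul0r mulr0 lexx.
have N1p' : 0 < N1 by rewrite lt_neqAle eq_sym N1p N10.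
have hc : c = N1 ^+ n / D.
  rewrite /c /Dkl /Bk -/N1 -/N2 hDL expr_div_n.
  field; rewrite ?expf_neq0 ?gt_eqF //.
set e := (2 * Bk z 1 * Bk z 2)^-1.
have hRk : Rk z 2 = (2 * N3 * D)^-1 by rewrite /Rk hDL.
have he : `|E| * D <= e.
  have [N3z|N3p] := eqVneq N3 0.
    have -> : e = 0 by rewrite /e /Bk -/N3 N3z mul0r mulr0 invr0.
    move: hE; rewrite hRk N3z mulr0 mul0r invr0 mul0r => hE.
    have E0 : `|E| = 0 by apply/eqP; rewrite eq_le hE normr_ge0.
    by rewrite E0 mul0r.
  have -> : e = N1 / (2 * N3).
    rewrite /e /Bk -/N1 -/N2 -/N3; field.
    by rewrite N3p N1p gt_eqF.
  apply: le_trans (ler_wpM2r (ltW D0) hE) _.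
  rewrite hRk le_eqVlt; apply/orP; left; apply/eqP; field.
  by rewrite N3p gt_eqF.
have hL0 : `|L0| = D^-1.
  move: hLD => /(congr1 (fun t => t / D)) /=; rewrite mulrK ?div1r // unitfE gt_eqF //=.
have hE' : `|E| <= e * D^-1.
  have -> : `|E| = `|E| * D * D^-1 by field; rewrite gt_eqF.
  by apply: ler_wpM2r => //; rewrite invr_ge0 ltW.
have h1 := lerB_normD L0 E.
have h2 := ler_normD L0 E.
rewrite hL0 in h1 h2.
have P0 : 0 <= N1 ^+ n by rewrite exprn_ge0.
rewrite hc; set P := N1 ^+ n in P0 *; set iD := D^-1 in h1 h2 hE' *.
set X := `|L0 + E| in h1 h2 *.
apply/andP; split; nra.
Qed.
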